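(* Let $G$ be a finite group and $p$ a prime. The power graph $P(G)$ contains no induced subgraph isomorphic to the path $P_4$ on four vertices, nor to the $4$-cycle $C_4$, whose four vertices are all elements of $G$ whose orders are powers of $p$.
   Context: The power graph $P(G)$ of a group $G$ has vertex set $G$, with distinct $u,v$ adjacent if and only if $u=v^i$ or $v=u^j$ for some integers $i,j$. *)

(* Defs.v *)
From mathcomp Require Import all_boot ssralg ssrint all_fingroup pgroup.
Set Implicit Arguments. Unset Strict Implicit. Unset Printing Implicit Defensive.

Local Open Scope group_scope.

Definition gexpz (gT : finGroupType) (v : gT) (z : int) : gT :=
  match z with
  | Posz n => v ^+ n
  | Negz n => (v ^+ n.+1)^-1
  end.

Definition power_adj (gT : finGroupType) (u v : gT) : Prop :=
  u <> v /\ ((exists i : int, u = gexpz v i) \/ (exists j : int, v = gexpz u j)).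

Definition distinct4 (gT : finGroupType) (a b c d : gT) : Prop :=
  a <> b /\ a <> c /\ a <> d /\ b <> c /\ b <> d /\ c <> d.

Definition induced_P4 (gT : finGroupType) (a b c d : gT) : Prop :=
  distinct4 a b c d /\
  (power_adj a b /\ power_adj b c /\ power_adj c d /\
   ~ power_adj a c /\ ~ power_adj a d /\ ~ power_adj b d).

Definition induced_C4 (gT : finGroupType) (a b c d : gT) : Prop :=
  distinct4 a b c d /\
  (power_adj a b /\ power_adj b c /\ power_adj c d /\ power_adj d a /\
   ~ power_adj a c /\ ~ power_adj b d).

(* Main.v *)
Require Import Defs.
From mathcomp Require Import all_boot ssralg ssrint all_fingroup pgroup.
From mathcomp Require Import cyclic.
Set Implicit Arguments. Unset Strict Implicit. Unset Printing Implicit Defensive.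
Local Open Scope group_scope.

Section Aux.
Variable gT : finGroupType.
Implicit Types x y z : gT.

Definition R x y := x \in <[y]>.

Lemma R_trans x y z : R x y -> R y z -> R x z.
Proof. rewrite /R => Hxy; rewrite -cycle_subG => /subsetP; apply; exact Hxy. Qed.

Lemma adjE x y : power_adj x y <-> x <> y /\ (R x y \/ R y x).
Proof.
have gin : forall (v : gT) (i : ssrint.int), gexpz v i \in <[v]>.
  move=> v [n|n] /=; rewrite ?groupV; apply: groupX; exact: cycle_id.
split.
  case=> ne [[i E]|[j E]]; split=> //.
    by left; rewrite /R E; exact: gin.
  by right; rewrite /R E; exact: gin.
case=> ne [/cycleP[n E]|/cycleP[n E]]; split=> //.
  by left; exists (Posz n).
by right; exists (Posz n).
Qed.

Lemma chain (p : nat) x y c : p.-elt x -> p.-elt y -> R x c -> R y c -> R x y \/ R y x.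
Proof.
rewrite /R /p_elt => px py; rewrite -!cycle_subG => sx sy.
have [i oi] := p_natP px; have [j oj] := p_natP py.
have cyc := cycle_cyclic c.
case: (leqP i j) => hij.
  left; have h : <[x]> \subset <[y]>.
    by rewrite -(cardSg_cyclic cyc sx sy) -!orderE oi oj dvdn_exp2l.
  exact: h.
right; have h : <[y]> \subset <[x]>.
  by rewrite -(cardSg_cyclic cyc sy sx) -!orderE oi oj dvdn_exp2l // ltnW.
exact: h.
Qed.
End Aux.

Theorem mainTheorem4 (gT : finGroupType) (G : {group gT}) (p : nat) :
  prime p ->
  (~ exists a b c d : gT,
       [/\ a \in G, b \in G, c \in G & d \in G] /\
       [/\ (p.-elt a)%g, (p.-elt b)%g, (p.-elt c)%g & (p.-elt d)%g] /\
       induced_P4 a b c d) /\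
  (~ exists a b c d : gT,
       [/\ a \in G, b \in G, c \in G & d \in G] /\
       [/\ (p.-elt a)%g, (p.-elt b)%g, (p.-elt c)%g & (p.-elt d)%g] /\
       induced_C4 a b c d).
Proof.
move=> _; split.
  case=> a [b [c [d [_ [[pa pb pc pd] [[nab [nac [nad [nbc [nbd ncd]]]]]
     [/adjE [_ ab] [/adjE [_ bc] [/adjE [_ cd] [ac [ad bd]]]]]]]]]]].
  have Nac : ~ (R a c \/ R c a) by move=> h; apply: ac; apply/adjE.
  have Nbd : ~ (R b d \/ R d b) by move=> h; apply: bd; apply/adjE.
  case: bc => [bc|cb].
  - case: ab => [ab|ba]; first by apply: Nac; left; exact: R_trans ab bc.
    case: cd => [cd|dc]; first by apply: Nbd; left; exact: R_trans bc cd.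
    by apply: Nbd; apply: (chain pb pd bc dc).
  - case: cd => [cd|dc]; last by apply: Nbd; right; exact: R_trans dc cb.
    case: ab => [ab|ba]; last by apply: Nac; right; exact: R_trans cb ba.
    by apply: Nac; apply: (chain pa pc ab cb).
case=> a [b [c [d [_ [[pa pb pc pd] [[nab [nac [nad [nbc [nbd ncd]]]]]
   [/adjE [_ ab] [/adjE [_ bc] [/adjE [_ cd] [/adjE [_ da] [ac bd]]]]]]]]]]].
have Nac : ~ (R a c \/ R c a) by move=> h; apply: ac; apply/adjE.
have Nbd : ~ (R b d \/ R d b) by move=> h; apply: bd; apply/adjE.
case: bc => [bc|cb].
- case: ab => [ab|ba]; first by apply: Nac; left; exact: R_trans ab bc.
  case: cd => [cd|dc]; first by apply: Nbd; left; exact: R_trans bc cd.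
  case: da => [da|ad]; last by apply: Nac; left; exact: R_trans ad dc.
  by apply: Nbd; apply: (chain pb pd ba da).
- case: cd => [cd|dc]; last by apply: Nbd; right; exact: R_trans dc cb.
  case: ab => [ab|ba]; last by apply: Nac; right; exact: R_trans cb ba.
  case: da => [da|ad]; first by apply: Nbd; right; exact: R_trans da ab.
  by apply: Nac; apply: (chain pa pc ad cd).
Qed.
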